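(* The loss of information about the receiver's initial position due to the nuisance parameters is $\mathbf G(\mathbf p_{U,0},\mathbf p_{U,0})=\sum_b\frac{\mathbf a_b\mathbf a_b^T}{\sum_{u,k}\mathrm{SNR}_{bu,k}\omega_{bU,k}}+\frac{\mathbf a_Q\mathbf a_Q^T}{\sum_{q,u,k}\mathrm{SNR}_{qu,k}\omega_{qU,k}}+\sum_b\frac{\mathbf d_b\mathbf d_b^T}{\sum_{u,k}\tfrac12\mathrm{SNR}_{bu,k}\alpha_{obu,k}^2}+\frac{\mathbf d_Q\mathbf d_Q^T}{\sum_{q,u,k}\tfrac12\mathrm{SNR}_{qu,k}\alpha_{oqu,k}^2}$, where $\mathbf a_b=\sum_{k,u}\mathrm{SNR}_{bu,k}\frac{\omega_{bU,k}}{c}\boldsymbol\Delta_{bu,k}$, $\mathbf a_Q=\sum_{q,u,k}\mathrm{SNR}_{qu,k}\frac{\omega_{qU,k}}{c}\boldsymbol\Delta_{qu,k}$, $\mathbf d_b=\sum_{u,k}\mathrm{SNR}_{bu,k}\frac{f_c\alpha_{obu,k}^2}{2}\nabla_{\mathbf p_{U,0}}\nu_{bU,k}$, $\mathbf d_Q=\sum_{q,u,k}\mathrm{SNR}_{qu,k}\frac{f_c\alpha_{oqu,k}^2}{2}\nabla_{\mathbf p_{U,0}}\nu_{qU,k}$.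
   Context: System: $N_B$ single-antenna LEO satellites indexed by $b$, $N_Q$ mutually synchronized single-antenna base stations (BSs) indexed by $q$, and a receiver with $N_U$ antennas indexed by $u$; transmissions occur in $N_K$ slots indexed by $k$, spaced $\Delta_t$ apart; $c$ is the speed of light, $f_c$ the carrier frequency. Receiver antenna $u$ is at $\mathbf p_{u,k}=\mathbf p_{U,0}+k\Delta_t\mathbf v_{U,0}+\mathbf Q(\boldsymbol\Phi_U)\tilde{\mathbf s}_u$, with $\mathbf Q(\boldsymbol\Phi_U)$ the 3D rotation matrix for orientation angles $\boldsymbol\Phi_U=[\alpha_U,\psi_U,\varphi_U]^T$ and $\tilde{\mathbf s}_u$ a known offset. LEO $b$ has known nominal position/velocity $\mathbf p_{b,k},\mathbf v_{b,k}$ and unknown constant position offset $\check{\mathbf p}_{b,0}$ and velocity offset $\check{\mathbf v}_{b,0}$; BSs are static and known. $\boldsymbol\Delta_{xy,k}$ is the unit vector from entity $x$ to entity $y$ at slot $k$ ($U$: receiver centroid, $u$: antenna $u$). Channel parameters: LEO–receiver link: delays $\tau_{bu,k}$, Dopplers $\nu_{bU,k}=\boldsymbol\Delta_{bU,k}^T(\mathbf v_{b,k}+\check{\mathbf v}_{b,0}-\mathbf v_{U,0})/c$, gains, time offset $\delta_{bU}$, frequency offset $\epsilon_{bU}$; BS–receiver link: delays $\tau_{qu,k}$, Dopplers $\nu_{qU,k}=-\boldsymbol\Delta_{qU,k}^T\mathbf v_{U,0}/c$, gains, common offsets $\delta_{QU},\epsilon_{QU}$; LEO–BS link: delays $\tau_{bq,k}$,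 Dopplers $\nu_{bq,k}=\boldsymbol\Delta_{bq,k}^T(\mathbf v_{b,k}+\check{\mathbf v}_{b,0})/c$, gains, offsets $\delta_{bQ},\epsilon_{bQ}$. $\mathrm{SNR}_{bu,k},\mathrm{SNR}_{qu,k},\mathrm{SNR}_{bq,k}$ are the received SNRs; $\alpha_{obu,k},\alpha_{oqu,k},\alpha_{obq,k}$ the RMS time durations; $\alpha_{1x,k},\alpha_{2x,k}$ the effective baseband bandwidth and baseband–carrier correlation of transmitter $x$; $f_{obU,k}=f_c(1-\nu_{bU,k})+\epsilon_{bU}$, $f_{oqU,k}=f_c(1-\nu_{qU,k})+\epsilon_{QU}$, $f_{obq,k}=f_c(1-\nu_{bq,k})+\epsilon_{bQ}$, and $\omega_{bU,k}=\alpha_{1b,k}^2+2f_{obU,k}\alpha_{1b,k}\alpha_{2b,k}+f_{obU,k}^2$, $\omega_{qU,k}=\alpha_{1q,k}^2+2f_{oqU,k}\alpha_{1q,k}\alpha_{2q,k}+f_{oqU,k}^2$, $\omega_{bq,k}=\alpha_{1q,k}^2+2f_{obq,k}\alpha_{1q,k}\alpha_{2q,k}+f_{obq,k}^2$. Channel-parameter FIM (links mutually independent, contributions additive): each observation (antenna $u$, slot $k$, LEO $b$) contributes $F(\tau_{bu,k},\tau_{bu,k})=F(\delta_{bU},\delta_{bU})=-F(\tau_{bu,k},\delta_{bU})=\mathrm{SNR}_{bu,k}\omega_{bU,k}$, $F(\nu_{bU,k},\nu_{bU,k})=\tfrac12\mathrm{SNR}_{bu,k}f_c^2\alpha_{obu,k}^2$,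 $F(\nu_{bU,k},\epsilon_{bU})=-\tfrac12\mathrm{SNR}_{bu,k}f_c\alpha_{obu,k}^2$, $F(\epsilon_{bU},\epsilon_{bU})=\tfrac12\mathrm{SNR}_{bu,k}\alpha_{obu,k}^2$, a gain-only diagonal term, and all other entries zero; the BS–receiver (indices $qu,k$, offsets $\delta_{QU},\epsilon_{QU}$, $\omega_{qU,k},\alpha_{oqu,k}$) and LEO–BS (indices $bq,k$, offsets $\delta_{bQ},\epsilon_{bQ}$, $\omega_{bq,k},\alpha_{obq,k}$) links are analogous. Location FIM: $\mathbf J_{\boldsymbol\kappa}=\boldsymbol\Upsilon\mathbf J_{\boldsymbol\eta}\boldsymbol\Upsilon^T$ where $\boldsymbol\Upsilon$ is the Jacobian with nonzero derivatives $\nabla_{\mathbf p_{U,0}}\tau_{bu,k}=\boldsymbol\Delta_{bu,k}/c$, $\nabla_{\mathbf p_{U,0}}\tau_{qu,k}=\boldsymbol\Delta_{qu,k}/c$, $\nabla_{\check{\mathbf p}_{b,0}}\tau_{bu,k}=-\boldsymbol\Delta_{bu,k}/c$, $\nabla_{\check{\mathbf p}_{b,0}}\tau_{bq,k}=-\boldsymbol\Delta_{bq,k}/c$, $\nabla_{\mathbf v_{U,0}}\tau_{bu,k}=k\Delta_t\boldsymbol\Delta_{bu,k}/c$, $\nabla_{\mathbf v_{U,0}}\tau_{qu,k}=k\Delta_t\boldsymbol\Delta_{qu,k}/c$, $\nabla_{\check{\mathbf v}_{b,0}}\tau_{bu,k}=-k\Delta_t\boldsymbol\Delta_{bu,k}/c$,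 $\nabla_{\check{\mathbf v}_{b,0}}\tau_{bq,k}=-k\Delta_t\boldsymbol\Delta_{bq,k}/c$, $\nabla_{\mathbf v_{U,0}}\nu_{bU,k}=-\boldsymbol\Delta_{bU,k}/c$, $\nabla_{\mathbf v_{U,0}}\nu_{qU,k}=-\boldsymbol\Delta_{qU,k}/c$, $\nabla_{\check{\mathbf v}_{b,0}}\nu_{bU,k}=\boldsymbol\Delta_{bU,k}/c$, $\nabla_{\check{\mathbf v}_{b,0}}\nu_{bq,k}=\boldsymbol\Delta_{bq,k}/c$, $\nabla_{\boldsymbol\Phi_U}\tau_{xu,k}=\frac1c[\boldsymbol\Delta_{xu,k}^T\partial_{\alpha_U}\mathbf Q\tilde{\mathbf s}_u,\boldsymbol\Delta_{xu,k}^T\partial_{\psi_U}\mathbf Q\tilde{\mathbf s}_u,\boldsymbol\Delta_{xu,k}^T\partial_{\varphi_U}\mathbf Q\tilde{\mathbf s}_u]^T$ ($x\in\{b,q\}$), the Doppler position-gradients $\nabla_{\mathbf p_{U,0}}\nu_{bU,k},\nabla_{\mathbf p_{U,0}}\nu_{qU,k},\nabla_{\check{\mathbf p}_{b,0}}\nu_{bU,k},\nabla_{\check{\mathbf p}_{b,0}}\nu_{bq,k}$, and identity on gains and offsets. $\mathbf F(\mathbf x,\mathbf y)$ denotes the block of $\mathbf J_{\boldsymbol\kappa}$ for sub-vectors $\mathbf x,\mathbf y$. Information loss: split $\boldsymbol\kappa=(\boldsymbol\kappa_1,\boldsymbol\kappa_2)$ with $\boldsymbol\kappa_1=(\mathbf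 p_{U,0},\mathbf v_{U,0},\boldsymbol\Phi_U,\{\check{\mathbf p}_{b,0}\},\{\check{\mathbf v}_{b,0}\})$ and nuisance $\boldsymbol\kappa_2$ = all channel gains and all time/frequency offsets $\delta_{bU},\epsilon_{bU},\delta_{QU},\epsilon_{QU},\delta_{bQ},\epsilon_{bQ}$. The loss matrix is $\mathbf J^{nu}=\mathbf J_{\boldsymbol\kappa_1,\boldsymbol\kappa_2}\mathbf J_{\boldsymbol\kappa_2}^{-1}\mathbf J_{\boldsymbol\kappa_1,\boldsymbol\kappa_2}^T$ (so the equivalent FIM is $\mathbf J_{\boldsymbol\kappa_1}-\mathbf J^{nu}$), and $\mathbf G(\mathbf x,\mathbf y)$ denotes its block for sub-vectors $\mathbf x,\mathbf y$. *)

(* Defs.v *)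
From HB Require Import structures.
From mathcomp Require Import all_boot all_order all_algebra.
Set Implicit Arguments. Unset Strict Implicit. Unset Printing Implicit Defensive.
Import Order.TTheory GRing.Theory Num.Theory.
Local Open Scope ring_scope.

(* Index types.  b : 'I_NB (LEOs), q : 'I_NQ (BSs), u : 'I_NU (antennas),    *)
(* k : 'I_NK (slots).                                                          *)

(* "geometric" channel parameters: delays and Dopplers *)
Inductive geo_idx (NB NQ NU NK : nat) :=
| Tbu of 'I_NB & 'I_NU & 'I_NK
| NbU of 'I_NB & 'I_NK
| Tqu of 'I_NQ & 'I_NU & 'I_NK
| NqU of 'I_NQ & 'I_NK
| Tbq of 'I_NB & 'I_NQ & 'I_NK
| Nbq of 'I_NB & 'I_NQ & 'I_NK.
Arguments Tbu {NB NQ NU NK}. Arguments NbU {NB NQ NU NK}.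
Arguments Tqu {NB NQ NU NK}. Arguments NqU {NB NQ NU NK}.
Arguments Tbq {NB NQ NU NK}. Arguments Nbq {NB NQ NU NK}.

(* nuisance parameters: channel gains and time/frequency offsets *)
Inductive nuis_idx (NB NQ NU NK : nat) :=
| Gbu of 'I_NB & 'I_NU & 'I_NK
| Gqu of 'I_NQ & 'I_NU & 'I_NK
| Gbq of 'I_NB & 'I_NQ & 'I_NK
| DbU of 'I_NB
| EbU of 'I_NB
| DQU
| EQU
| DbQ of 'I_NB
| EbQ of 'I_NB.
Arguments Gbu {NB NQ NU NK}. Arguments Gqu {NB NQ NU NK}.
Arguments Gbq {NB NQ NU NK}. Arguments DbU {NB NQ NU NK}.
Arguments EbU {NB NQ NU NK}. Arguments DQU {NB NQ NU NK}.
Arguments EQU {NB NQ NU NK}. Arguments DbQ {NB NQ NU NK}.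
Arguments EbQ {NB NQ NU NK}.

(* location parameters kappa_1 (coordinates i : 'I_3) *)
Inductive loc_idx (NB : nat) :=
| PU of 'I_3
| VU of 'I_3
| PhiU of 'I_3
| Pb of 'I_NB & 'I_3
| Vb of 'I_NB & 'I_3.
Arguments PU {NB}. Arguments VU {NB}. Arguments PhiU {NB}.
Arguments Pb {NB}. Arguments Vb {NB}.

Section FinInstances.
Variables NB NQ NU NK : nat.

Definition geo_enc (g : geo_idx NB NQ NU NK) :=
  match g with
  | Tbu b u k => inl (b, u, k)
  | NbU b k => inr (inl (b, k))
  | Tqu q u k => inr (inr (inl (q, u, k)))
  | NqU q k => inr (inr (inr (inl (q, k))))
  | Tbq b q k => inr (inr (inr (inr (inl (b, q, k)))))
  | Nbq b q k => inr (inr (inr (inr (inr (b, q, k)))))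
  end.
Definition geo_dec (x : ('I_NB * 'I_NU * 'I_NK) + (('I_NB * 'I_NK) +
   (('I_NQ * 'I_NU * 'I_NK) + (('I_NQ * 'I_NK) +
   (('I_NB * 'I_NQ * 'I_NK) + ('I_NB * 'I_NQ * 'I_NK)))))) :
   geo_idx NB NQ NU NK :=
  match x with
  | inl (b, u, k) => Tbu b u k
  | inr (inl (b, k)) => NbU b k
  | inr (inr (inl (q, u, k))) => Tqu q u k
  | inr (inr (inr (inl (q, k)))) => NqU q k
  | inr (inr (inr (inr (inl (b, q, k))))) => Tbq b q k
  | inr (inr (inr (inr (inr (b, q, k))))) => Nbq b q k
  end.
Lemma geo_encK : cancel geo_enc geo_dec. Proof. by case. Qed.
HB.instance Definition _ := Equality.copy (geo_idx NB NQ NU NK) (can_type geo_encK).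
HB.instance Definition _ := Choice.copy (geo_idx NB NQ NU NK) (can_type geo_encK).
HB.instance Definition _ := Countable.copy (geo_idx NB NQ NU NK) (can_type geo_encK).
HB.instance Definition _ := Finite.copy (geo_idx NB NQ NU NK) (can_type geo_encK).

Definition nuis_enc (n : nuis_idx NB NQ NU NK) :=
  match n with
  | Gbu b u k => inl (b, u, k)
  | Gqu q u k => inr (inl (q, u, k))
  | Gbq b q k => inr (inr (inl (b, q, k)))
  | DbU b => inr (inr (inr (inl b)))
  | EbU b => inr (inr (inr (inr (inl b))))
  | DQU => inr (inr (inr (inr (inr (inl tt)))))
  | EQU => inr (inr (inr (inr (inr (inr (inl tt))))))
  | DbQ b => inr (inr (inr (inr (inr (inr (inr (inl b)))))))
  | EbQ b => inr (inr (inr (inr (inr (inr (inr (inr b)))))))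
  end.
Definition nuis_dec (x : ('I_NB * 'I_NU * 'I_NK) + (('I_NQ * 'I_NU * 'I_NK) +
   (('I_NB * 'I_NQ * 'I_NK) + ('I_NB + ('I_NB + (unit + (unit +
   ('I_NB + 'I_NB)))))))) : nuis_idx NB NQ NU NK :=
  match x with
  | inl (b, u, k) => Gbu b u k
  | inr (inl (q, u, k)) => Gqu q u k
  | inr (inr (inl (b, q, k))) => Gbq b q k
  | inr (inr (inr (inl b))) => DbU b
  | inr (inr (inr (inr (inl b)))) => EbU b
  | inr (inr (inr (inr (inr (inl _))))) => DQU
  | inr (inr (inr (inr (inr (inr (inl _)))))) => EQU
  | inr (inr (inr (inr (inr (inr (inr (inl b))))))) => DbQ b
  | inr (inr (inr (inr (inr (inr (inr (inr b))))))) => EbQ b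
  end.
Lemma nuis_encK : cancel nuis_enc nuis_dec. Proof. by case. Qed.
HB.instance Definition _ := Equality.copy (nuis_idx NB NQ NU NK) (can_type nuis_encK).
HB.instance Definition _ := Choice.copy (nuis_idx NB NQ NU NK) (can_type nuis_encK).
HB.instance Definition _ := Countable.copy (nuis_idx NB NQ NU NK) (can_type nuis_encK).
HB.instance Definition _ := Finite.copy (nuis_idx NB NQ NU NK) (can_type nuis_encK).

Definition loc_enc (l : loc_idx NB) :=
  match l with
  | PU i => inl i
  | VU i => inr (inl i)
  | PhiU i => inr (inr (inl i))
  | Pb b i => inr (inr (inr (inl (b, i))))
  | Vb b i => inr (inr (inr (inr (b, i))))
  end.
Definition loc_dec (x : 'I_3 + ('I_3 + ('I_3 + (('I_NB * 'I_3) + ('I_NB * 'I_3)))))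
  : loc_idx NB :=
  match x with
  | inl i => PU i
  | inr (inl i) => VU i
  | inr (inr (inl i)) => PhiU i
  | inr (inr (inr (inl (b, i)))) => Pb b i
  | inr (inr (inr (inr (b, i)))) => Vb b i
  end.
Lemma loc_encK : cancel loc_enc loc_dec. Proof. by case. Qed.
HB.instance Definition _ := Equality.copy (loc_idx NB) (can_type loc_encK).
HB.instance Definition _ := Choice.copy (loc_idx NB) (can_type loc_encK).
HB.instance Definition _ := Countable.copy (loc_idx NB) (can_type loc_encK).
HB.instance Definition _ := Finite.copy (loc_idx NB) (can_type loc_encK).
End FinInstances.

Definition eta_idx NB NQ NU NK : finType :=
  (geo_idx NB NQ NU NK + nuis_idx NB NQ NU NK)%type.
(* kappa = (kappa_1, kappa_2) = location parameters + (gains, offsets) *)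
Definition kappa_idx NB NQ NU NK : finType :=
  (loc_idx NB + nuis_idx NB NQ NU NK)%type.

(* System data.  All geometric quantities enter the FIM only through the     *)
(* Jacobian entries listed in the paper; they are given here as data.        *)
Record sysdata (R : realFieldType) (NB NQ NU NK : nat) := SysData {
  c_light : R;
  f_c : R;
  Delta_t : R;
  Dl_bu : 'I_NB -> 'I_NU -> 'I_NK -> 'cV[R]_3;
  Dl_bU : 'I_NB -> 'I_NK -> 'cV[R]_3;
  Dl_qu : 'I_NQ -> 'I_NU -> 'I_NK -> 'cV[R]_3;
  Dl_qU : 'I_NQ -> 'I_NK -> 'cV[R]_3;
  Dl_bq : 'I_NB -> 'I_NQ -> 'I_NK -> 'cV[R]_3;
  dQ : 'I_3 -> 'M[R]_3;    (* partial derivatives of Q(Phi_U) wrt alpha_U, psi_U, varphi_U *)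
  s_off : 'I_NU -> 'cV[R]_3;
  gpU_nu_bU : 'I_NB -> 'I_NK -> 'cV[R]_3;
  gpU_nu_qU : 'I_NQ -> 'I_NK -> 'cV[R]_3;
  gpb_nu_bU : 'I_NB -> 'I_NK -> 'cV[R]_3;
  gpb_nu_bq : 'I_NB -> 'I_NQ -> 'I_NK -> 'cV[R]_3;
  snr_bu : 'I_NB -> 'I_NU -> 'I_NK -> R;
  snr_qu : 'I_NQ -> 'I_NU -> 'I_NK -> R;
  snr_bq : 'I_NB -> 'I_NQ -> 'I_NK -> R;
  alo_bu : 'I_NB -> 'I_NU -> 'I_NK -> R;
  alo_qu : 'I_NQ -> 'I_NU -> 'I_NK -> R;
  alo_bq : 'I_NB -> 'I_NQ -> 'I_NK -> R;
  al1_b : 'I_NB -> 'I_NK -> R;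
  al2_b : 'I_NB -> 'I_NK -> R;
  al1_q : 'I_NQ -> 'I_NK -> R;
  al2_q : 'I_NQ -> 'I_NK -> R;
  nu_bU : 'I_NB -> 'I_NK -> R;
  nu_qU : 'I_NQ -> 'I_NK -> R;
  nu_bq : 'I_NB -> 'I_NQ -> 'I_NK -> R;
  eps_bU : 'I_NB -> R;
  eps_QU : R;
  eps_bQ : 'I_NB -> R;
  gfim_bu : 'I_NB -> 'I_NU -> 'I_NK -> R;        (* gain-only diagonal FIM term *)
  gfim_qu : 'I_NQ -> 'I_NU -> 'I_NK -> R;
  gfim_bq : 'I_NB -> 'I_NQ -> 'I_NK -> R
}.

Section Model.
Variables (R : realFieldType) (NB NQ NU NK : nat) (S : sysdata R NB NQ NU NK).

Local Notation c := (c_light S).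
Local Notation fc := (f_c S).
Local Notation eta := (eta_idx NB NQ NU NK).
Local Notation kappa := (kappa_idx NB NQ NU NK).
Local Notation nuis := (nuis_idx NB NQ NU NK).
Local Notation loc := (loc_idx NB).

Definition f_obU b k := fc * (1 - nu_bU S b k) + eps_bU S b.
Definition f_oqU q k := fc * (1 - nu_qU S q k) + eps_QU S.
Definition f_obq b q k := fc * (1 - nu_bq S b q k) + eps_bQ S b.
Definition omega_bU b k :=
  al1_b S b k ^+ 2 + 2 * f_obU b k * al1_b S b k * al2_b S b k + f_obU b k ^+ 2.
Definition omega_qU q k :=
  al1_q S q k ^+ 2 + 2 * f_oqU q k * al1_q S q k * al2_q S q k + f_oqU q k ^+ 2.
Definition omega_bq b q k :=
  al1_q S q k ^+ 2 + 2 * f_obq b q k * al1_q S q k * al2_q S q k + f_obq b q k ^+ 2.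

Definition ind (x y : eta) : R := (x == y)%:R.

Definition obs_fim (T Nu : eta) (D E G : eta) (snr w a g : R) (e e' : eta) : R :=
  snr * w * (ind T e * ind T e' + ind D e * ind D e'
             - ind T e * ind D e' - ind D e * ind T e')
  + (snr / 2 * fc ^+ 2 * a ^+ 2) * (ind Nu e * ind Nu e')
  - (snr / 2 * fc * a ^+ 2) * (ind Nu e * ind E e' + ind E e * ind Nu e')
  + (snr / 2 * a ^+ 2) * (ind E e * ind E e')
  + g * (ind G e * ind G e').

Definition J_eta (e e' : eta) : R :=
  \sum_(b < NB) \sum_(u < NU) \sum_(k < NK)
     obs_fim (inl (Tbu b u k)) (inl (NbU b k)) (inr (DbU b)) (inr (EbU b))
             (inr (Gbu b u k)) (snr_bu S b u k) (omega_bU b k) (alo_bu S b u k)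
             (gfim_bu S b u k) e e'
  + \sum_(q < NQ) \sum_(u < NU) \sum_(k < NK)
     obs_fim (inl (Tqu q u k)) (inl (NqU q k)) (inr DQU) (inr EQU)
             (inr (Gqu q u k)) (snr_qu S q u k) (omega_qU q k) (alo_qu S q u k)
             (gfim_qu S q u k) e e'
  + \sum_(b < NB) \sum_(q < NQ) \sum_(k < NK)
     obs_fim (inl (Tbq b q k)) (inl (Nbq b q k)) (inr (DbQ b)) (inr (EbQ b))
             (inr (Gbq b q k)) (snr_bq S b q k) (omega_bq b q k) (alo_bq S b q k)
             (gfim_bq S b q k) e e'.

(* Jacobian Upsilon : entry (kappa-component x, eta-component e) = d e / d x *)
Definition ups (x : kappa) (e : eta) : R :=
  match x, e with
  | inl (PU i), inl (Tbu b u k) => Dl_bu S b u k i 0 / c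
  | inl (PU i), inl (Tqu q u k) => Dl_qu S q u k i 0 / c
  | inl (PU i), inl (NbU b k) => gpU_nu_bU S b k i 0
  | inl (PU i), inl (NqU q k) => gpU_nu_qU S q k i 0
  | inl (VU i), inl (Tbu b u k) => k%:R * Delta_t S * Dl_bu S b u k i 0 / c
  | inl (VU i), inl (Tqu q u k) => k%:R * Delta_t S * Dl_qu S q u k i 0 / c
  | inl (VU i), inl (NbU b k) => - Dl_bU S b k i 0 / c
  | inl (VU i), inl (NqU q k) => - Dl_qU S q k i 0 / c
  | inl (PhiU j), inl (Tbu b u k) =>
      ((Dl_bu S b u k)^T *m (dQ S j *m s_off S u)) 0 0 / c
  | inl (PhiU j), inl (Tqu q u k) =>
      ((Dl_qu S q u k)^T *m (dQ S j *m s_off S u)) 0 0 / c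
  | inl (Pb b' i), inl (Tbu b u k) => (b == b')%:R * (- Dl_bu S b u k i 0 / c)
  | inl (Pb b' i), inl (Tbq b q k) => (b == b')%:R * (- Dl_bq S b q k i 0 / c)
  | inl (Pb b' i), inl (NbU b k) => (b == b')%:R * gpb_nu_bU S b k i 0
  | inl (Pb b' i), inl (Nbq b q k) => (b == b')%:R * gpb_nu_bq S b q k i 0
  | inl (Vb b' i), inl (Tbu b u k) =>
      (b == b')%:R * (- (k%:R * Delta_t S * Dl_bu S b u k i 0) / c)
  | inl (Vb b' i), inl (Tbq b q k) =>
      (b == b')%:R * (- (k%:R * Delta_t S * Dl_bq S b q k i 0) / c)
  | inl (Vb b' i), inl (NbU b k) => (b == b')%:R * (Dl_bU S b k i 0 / c)
  | inl (Vb b' i), inl (Nbq b q k) => (b == b')%:R * (Dl_bq S b q k i 0 / c)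
  | inr n, inr n' => (n == n')%:R
  | _, _ => 0
  end.

Definition J_kappa (x y : kappa) : R :=
  \sum_(e : eta) \sum_(e' : eta) ups x e * J_eta e e' * ups y e'.

Definition J12 : 'M[R]_(#|{: loc}|, #|{: nuis}|) :=
  \matrix_(i, j) J_kappa (inl (enum_val i)) (inr (enum_val j)).
Definition J22 : 'M[R]_(#|{: nuis}|) :=
  \matrix_(i, j) J_kappa (inr (enum_val i)) (inr (enum_val j)).

Definition J_nu : 'M[R]_(#|{: loc}|) := J12 *m invmx J22 *m J12^T.

Definition G_pU_pU : 'M[R]_3 :=
  \matrix_(i, j) J_nu (enum_rank (PU i : loc)) (enum_rank (PU j : loc)).

Definition a_b (b : 'I_NB) : 'cV[R]_3 :=
  \sum_(k < NK) \sum_(u < NU) (snr_bu S b u k * omega_bU b k / c) *: Dl_bu S b u k.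
Definition a_Q : 'cV[R]_3 :=
  \sum_(q < NQ) \sum_(u < NU) \sum_(k < NK)
     (snr_qu S q u k * omega_qU q k / c) *: Dl_qu S q u k.
Definition d_b (b : 'I_NB) : 'cV[R]_3 :=
  \sum_(u < NU) \sum_(k < NK)
     (snr_bu S b u k * (fc * alo_bu S b u k ^+ 2 / 2)) *: gpU_nu_bU S b k.
Definition d_Q : 'cV[R]_3 :=
  \sum_(q < NQ) \sum_(u < NU) \sum_(k < NK)
     (snr_qu S q u k * (fc * alo_qu S q u k ^+ 2 / 2)) *: gpU_nu_qU S q k.

End Model.

(* Main.v *)
Require Import Defs.
From HB Require Import structures.
From mathcomp Require Import all_boot all_order all_algebra.
From mathcomp Require Import ring lra.
Import Order.TTheory GRing.Theory Num.Theory.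
Local Open Scope ring_scope.



Lemma sum_ind {R : realFieldType} {NB NQ NU NK : nat}
  (f : eta_idx NB NQ NU NK -> R) X :
  \sum_e f e * ind R X e = f X.
Proof.
rewrite (bigD1 X) //= /ind eqxx mulr1 big1 ?addr0 // => e /negbTE.
by rewrite eq_sym => ->; rewrite mulr0.
Qed.

Definition obsL {R : realFieldType} {NB NQ NU NK : nat} (S : sysdata R NB NQ NU NK)
  (f : eta_idx NB NQ NU NK -> R) (T Nu D E G : eta_idx NB NQ NU NK) (snr w a g : R) e' :=
  snr * w * (f T * ind R T e' + f D * ind R D e' - f T * ind R D e' - f D * ind R T e')
  + (snr / 2 * f_c S ^+ 2 * a ^+ 2) * (f Nu * ind R Nu e')
  - (snr / 2 * f_c S * a ^+ 2) * (f Nu * ind R E e' + f E * ind R Nu e')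
  + (snr / 2 * a ^+ 2) * (f E * ind R E e')
  + g * (f G * ind R G e').

Lemma sum_obs {R : realFieldType} {NB NQ NU NK : nat} (S : sysdata R NB NQ NU NK)
  (f : eta_idx NB NQ NU NK -> R) T Nu D E G snr w a g e' :
  \sum_e f e * obs_fim S T Nu D E G snr w a g e e' = obsL S f T Nu D E G snr w a g e'.
Proof.
pose A := snr * w * (ind R T e' - ind R D e').
pose B := snr * w * (ind R D e' - ind R T e').
pose C := snr / 2 * f_c S ^+ 2 * a ^+ 2 * ind R Nu e' - snr / 2 * f_c S * a ^+ 2 * ind R E e'.
pose Dd := snr / 2 * a ^+ 2 * ind R E e' - snr / 2 * f_c S * a ^+ 2 * ind R Nu e'.
pose H := g * ind R G e'.
transitivity (\sum_e (f e * ind R T e * A + f e * ind R D e * B + f e * ind R Nu e * C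
   + f e * ind R E e * Dd + f e * ind R G e * H)).
  by apply: eq_bigr => e _; rewrite /obs_fim /A /B /C /Dd /H; ring.
rewrite !big_split /= -!mulr_suml !sum_ind /obsL /A /B /C /Dd /H; ring.
Qed.



Lemma sum_J_eta {R : realFieldType} {NB NQ NU NK : nat} (S : sysdata R NB NQ NU NK)
  (f : eta_idx NB NQ NU NK -> R) e' :
  \sum_e f e * J_eta S e e' =
  \sum_(b < NB) \sum_(u < NU) \sum_(k < NK)
     obsL S f (inl (Tbu b u k)) (inl (NbU b k)) (inr (DbU b)) (inr (EbU b))
             (inr (Gbu b u k)) (snr_bu S b u k) (omega_bU S b k) (alo_bu S b u k)
             (gfim_bu S b u k) e'
  + \sum_(q < NQ) \sum_(u < NU) \sum_(k < NK)
     obsL S f (inl (Tqu q u k)) (inl (NqU q k)) (inr DQU) (inr EQU)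
             (inr (Gqu q u k)) (snr_qu S q u k) (omega_qU S q k) (alo_qu S q u k)
             (gfim_qu S q u k) e'
  + \sum_(b < NB) \sum_(q < NQ) \sum_(k < NK)
     obsL S f (inl (Tbq b q k)) (inl (Nbq b q k)) (inr (DbQ b)) (inr (EbQ b))
             (inr (Gbq b q k)) (snr_bq S b q k) (omega_bq S b q k) (alo_bq S b q k)
             (gfim_bq S b q k) e'.
Proof.
rewrite /J_eta.
under eq_bigr do rewrite !mulrDr !mulr_sumr.
rewrite !big_split /=.
congr (_ + _ + _);
  (rewrite exchange_big; apply: eq_bigr => b _;
   under eq_bigr do rewrite mulr_sumr;
   rewrite exchange_big; apply: eq_bigr => u _;
   under eq_bigr do rewrite mulr_sumr;
   rewrite exchange_big; apply: eq_bigr => k _;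
   exact: sum_obs).
Qed.



Lemma ups_inr {R : realFieldType} {NB NQ NU NK : nat} (S : sysdata R NB NQ NU NK) n e :
  ups S (inr n) e = ind R (inr n) e.
Proof. by case: e. Qed.

Lemma J_kappa_inr {R : realFieldType} {NB NQ NU NK : nat} (S : sysdata R NB NQ NU NK) x n :
  J_kappa S x (inr n) = \sum_e ups S x e * J_eta S e (inr n).
Proof.
rewrite /J_kappa; apply: eq_bigr => e _.
under eq_bigr do rewrite ups_inr.
exact: (sum_ind (fun e' => ups S x e * J_eta S e e')).
Qed.

Lemma ind_trans {R : realFieldType} {NB NQ NU NK : nat} (a b c : eta_idx NB NQ NU NK) :
  ind R a b * ind R b c = ind R a b * ind R a c.
Proof. by rewrite /ind; case: eqP => [->|_]; rewrite ?mul0r. Qed.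

Lemma obsL_inr {R : realFieldType} {NB NQ NU NK : nat} (S : sysdata R NB NQ NU NK)
  n n' t nu D E G snr w a g :
  obsL S (ind R (inr n)) (inl t) (inl nu) D E G snr w a g (inr n') =
  ind R (inr n) (inr n') *
    (snr * w * ind R (inr n) D + snr / 2 * a ^+ 2 * ind R (inr n) E + g * ind R (inr n) G).
Proof.
rewrite /obsL !ind_trans.
have -> : ind R (inr n) (inl t) = 0 by [].
have -> : ind R (inr n) (inl nu) = 0 by [].
have -> : ind R (inl t) (inr n') = 0 by [].
have -> : ind R (inl nu) (inr n') = 0 by [].
ring.
Qed.

Definition s1 {R : realFieldType} {NB NQ NU NK : nat} (S : sysdata R NB NQ NU NK)
  (n : nuis_idx NB NQ NU NK) b u k : R :=
     snr_bu S b u k * omega_bU S b k * ind R (inr n) (inr (DbU b))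
      + snr_bu S b u k / 2 * alo_bu S b u k ^+ 2 * ind R (inr n) (inr (EbU b))
      + gfim_bu S b u k * ind R (inr n) (inr (Gbu b u k)).
Definition s2 {R : realFieldType} {NB NQ NU NK : nat} (S : sysdata R NB NQ NU NK)
  (n : nuis_idx NB NQ NU NK) q u k : R :=
     snr_qu S q u k * omega_qU S q k * ind R (inr n) (inr DQU)
      + snr_qu S q u k / 2 * alo_qu S q u k ^+ 2 * ind R (inr n) (inr EQU)
      + gfim_qu S q u k * ind R (inr n) (inr (Gqu q u k)).
Definition s3 {R : realFieldType} {NB NQ NU NK : nat} (S : sysdata R NB NQ NU NK)
  (n : nuis_idx NB NQ NU NK) b q k : R :=
     snr_bq S b q k * omega_bq S b q k * ind R (inr n) (inr (DbQ b))
      + snr_bq S b q k / 2 * alo_bq S b q k ^+ 2 * ind R (inr n) (inr (EbQ b))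
      + gfim_bq S b q k * ind R (inr n) (inr (Gbq b q k)).
Definition Dn {R : realFieldType} {NB NQ NU NK : nat} (S : sysdata R NB NQ NU NK)
  (n : nuis_idx NB NQ NU NK) : R :=
  \sum_(b < NB) \sum_(u < NU) \sum_(k < NK) s1 S n b u k
  + \sum_(q < NQ) \sum_(u < NU) \sum_(k < NK) s2 S n q u k
  + \sum_(b < NB) \sum_(q < NQ) \sum_(k < NK) s3 S n b q k.

Lemma J22_entry {R : realFieldType} {NB NQ NU NK : nat} (S : sysdata R NB NQ NU NK) n n' :
  J_kappa S (inr n) (inr n') = ind R (inr n) (inr n') * Dn S n.
Proof.
rewrite J_kappa_inr.
under eq_bigr do rewrite ups_inr.
rewrite sum_J_eta.
under eq_bigr do under eq_bigr do under eq_bigr do rewrite obsL_inr.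
under [X in _ + X + _]eq_bigr do under eq_bigr do under eq_bigr do rewrite obsL_inr.
under [X in _ + X]eq_bigr do under eq_bigr do under eq_bigr do rewrite obsL_inr.
by rewrite /Dn !mulrDr !mulr_sumr; congr (_ + _ + _);
  apply: eq_bigr => ? _; rewrite mulr_sumr; apply: eq_bigr => ? _;
  rewrite mulr_sumr.
Qed.



Lemma le_sum3 {R : realFieldType} {a b c : nat} (F : 'I_a -> 'I_b -> 'I_c -> R) i j k :
  (forall i j k, 0 <= F i j k) -> F i j k <= \sum_i \sum_j \sum_k F i j k.
Proof.
move=> H.
apply: (le_trans (_ : _ <= \sum_k F i j k)).
  by rewrite (bigD1 k) //= lerDl sumr_ge0.
apply: (le_trans (_ : _ <= \sum_j \sum_k F i j k)).
  by rewrite (bigD1 j) //= lerDl sumr_ge0 // => *; rewrite sumr_ge0.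
by rewrite (bigD1 i) //= lerDl sumr_ge0 // => *; rewrite sumr_ge0 // => *; rewrite sumr_ge0.
Qed.

Lemma summand_ge0 {R : realFieldType} (x w a g : R) (b1 b2 b3 : bool) :
  0 < x -> 0 < w -> 0 < g ->
  0 <= x * w * b1%:R + x / 2 * a ^+ 2 * b2%:R + g * b3%:R.
Proof.
move=> hx hw hg.
have h2 : 0 <= x / 2 * a ^+ 2 by rewrite mulr_ge0 ?sqr_ge0 // divr_ge0 ?ltW.
have t1 : 0 <= x * w * b1%:R.
  by apply: mulr_ge0; [apply: mulr_ge0; exact: ltW|exact: ler0n].
have t2 : 0 <= x / 2 * a ^+ 2 * b2%:R by apply: mulr_ge0 => //; exact: ler0n.
have t3 : 0 <= g * b3%:R by apply: mulr_ge0; [exact: ltW|exact: ler0n].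
by rewrite !addr_ge0.
Qed.

Lemma Dn_gt0 {R : realFieldType} {NB NQ NU NK : nat} (S : sysdata R NB NQ NU NK) n :
  (0 < NQ)%N -> (0 < NU)%N -> (0 < NK)%N ->
  (forall b u k, 0 < snr_bu S b u k) ->
  (forall q u k, 0 < snr_qu S q u k) ->
  (forall b q k, 0 < snr_bq S b q k) ->
  (forall b u k, 0 < alo_bu S b u k) ->
  (forall q u k, 0 < alo_qu S q u k) ->
  (forall b q k, 0 < alo_bq S b q k) ->
  (forall b k, 0 < omega_bU S b k) ->
  (forall q k, 0 < omega_qU S q k) ->
  (forall b q k, 0 < omega_bq S b q k) ->
  (forall b u k, 0 < gfim_bu S b u k) ->
  (forall q u k, 0 < gfim_qu S q u k) ->
  (forall b q k, 0 < gfim_bq S b q k) ->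
  0 < Dn S n.
Proof.
move=> hQ hU hK sbu squ sbq abu aqu abq obu oqu obq gbu gqu gbq.
set q0 := Ordinal hQ. set u0 := Ordinal hU. set k0 := Ordinal hK.
rewrite /Dn.
have H1 : forall b u k, 0 <= s1 S n b u k by move=> *; exact: summand_ge0.
have H2 : forall q u k, 0 <= s2 S n q u k by move=> *; exact: summand_ge0.
have H3 : forall b q k, 0 <= s3 S n b q k by move=> *; exact: summand_ge0.
have P1 : 0 <= \sum_b \sum_u \sum_k s1 S n b u k.
  by rewrite !sumr_ge0 // => *; rewrite !sumr_ge0 // => *; rewrite !sumr_ge0.
have P2 : 0 <= \sum_b \sum_u \sum_k s2 S n b u k.
  by rewrite !sumr_ge0 // => *; rewrite !sumr_ge0 // => *; rewrite !sumr_ge0.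
have P3 : 0 <= \sum_b \sum_u \sum_k s3 S n b u k.
  by rewrite !sumr_ge0 // => *; rewrite !sumr_ge0 // => *; rewrite !sumr_ge0.
case: n H1 H2 H3 P1 P2 P3 => [b u k|q u k|b q k|b|b| | |b|b] H1 H2 H3 P1 P2 P3.
- have := le_sum3 _ b u k H1; rewrite /s1 /ind /= ?eqxx /= => h.
  have := gbu b u k; lra.
- have := le_sum3 _ q u k H2; rewrite /s2 /ind /= ?eqxx /= => h.
  have := gqu q u k; lra.
- have := le_sum3 _ b q k H3; rewrite /s3 /ind /= ?eqxx /= => h.
  have := gbq b q k; lra.
- have := le_sum3 _ b u0 k0 H1; rewrite /s1 /ind /= ?eqxx /= => h.
  have := mulr_gt0 (sbu b u0 k0) (obu b k0); lra.
- have := le_sum3 _ b u0 k0 H1; rewrite /s1 /ind /= ?eqxx /= => h.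
  have : 0 < snr_bu S b u0 k0 / 2 * alo_bu S b u0 k0 ^+ 2.
    by rewrite mulr_gt0 ?divr_gt0 ?exprn_gt0.
  lra.
- have := le_sum3 _ q0 u0 k0 H2; rewrite /s2 /ind /= ?eqxx /= => h.
  have := mulr_gt0 (squ q0 u0 k0) (oqu q0 k0); lra.
- have := le_sum3 _ q0 u0 k0 H2; rewrite /s2 /ind /= ?eqxx /= => h.
  have : 0 < snr_qu S q0 u0 k0 / 2 * alo_qu S q0 u0 k0 ^+ 2.
    by rewrite mulr_gt0 ?divr_gt0 ?exprn_gt0.
  lra.
- have := le_sum3 _ b q0 k0 H3; rewrite /s3 /ind /= ?eqxx /= => h.
  have := mulr_gt0 (sbq b q0 k0) (obq b q0 k0); lra.
- have := le_sum3 _ b q0 k0 H3; rewrite /s3 /ind /= ?eqxx /= => h.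
  have : 0 < snr_bq S b q0 k0 / 2 * alo_bq S b q0 k0 ^+ 2.
    by rewrite mulr_gt0 ?divr_gt0 ?exprn_gt0.
  lra.
Qed.



Lemma obsL_PU_bu {R : realFieldType} {NB NQ NU NK : nat} (S : sysdata R NB NQ NU NK)
  i b u k snr w a g n :
  obsL S (ups S (inl (PU i))) (inl (Tbu b u k)) (inl (NbU b k)) (inr (DbU b)) (inr (EbU b))
     (inr (Gbu b u k)) snr w a g (inr n) =
  - (snr * w * (Dl_bu S b u k i 0 / c_light S)) * ind R (inr (DbU b)) (inr n)
  - (snr * (f_c S * a ^+ 2 / 2) * gpU_nu_bU S b k i 0) * ind R (inr (EbU b)) (inr n).
Proof.
rewrite /obsL.
have -> : ind R (inl (Tbu b u k)) (inr n) = 0 by reflexivity.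
have -> : ind R (inl (NbU b k)) (inr n) = 0 by reflexivity.
have -> : ups S (inl (PU i)) (inr (DbU b)) = 0 by reflexivity.
have -> : ups S (inl (PU i)) (inr (EbU b)) = 0 by reflexivity.
have -> : ups S (inl (PU i)) (inr (Gbu b u k)) = 0 by reflexivity.
have -> : ups S (inl (PU i)) (inl (Tbu b u k)) = Dl_bu S b u k i 0 / c_light S by reflexivity.
have -> : ups S (inl (PU i)) (inl (NbU b k)) = gpU_nu_bU S b k i 0 by reflexivity.
repeat match goal with |- context [ind ?R ?a ?b] => generalize (ind R a b); intro end.
ring.
Qed.


Lemma obsL_PU_qu {R : realFieldType} {NB NQ NU NK : nat} (S : sysdata R NB NQ NU NK)
  i q u k snr w a g n :
  obsL S (ups S (inl (PU i))) (inl (Tqu q u k)) (inl (NqU q k)) (inr DQU) (inr EQU)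
     (inr (Gqu q u k)) snr w a g (inr n) =
  - (snr * w / c_light S * Dl_qu S q u k i 0) * ind R (inr DQU) (inr n)
  - (snr * (f_c S * a ^+ 2 / 2) * gpU_nu_qU S q k i 0) * ind R (inr EQU) (inr n).
Proof.
rewrite /obsL.
have -> : ind R (inl (Tqu q u k)) (inr n) = 0 by reflexivity.
have -> : ind R (inl (NqU q k)) (inr n) = 0 by reflexivity.
have -> : ups S (inl (PU i)) (inr DQU) = 0 by reflexivity.
have -> : ups S (inl (PU i)) (inr EQU) = 0 by reflexivity.
have -> : ups S (inl (PU i)) (inr (Gqu q u k)) = 0 by reflexivity.
have -> : ups S (inl (PU i)) (inl (Tqu q u k)) = Dl_qu S q u k i 0 / c_light S by reflexivity.
have -> : ups S (inl (PU i)) (inl (NqU q k)) = gpU_nu_qU S q k i 0 by reflexivity.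
repeat match goal with |- context [ind ?R ?a ?b] => generalize (ind R a b); intro end.
ring.
Qed.

Lemma obsL_PU_bq {R : realFieldType} {NB NQ NU NK : nat} (S : sysdata R NB NQ NU NK)
  i b q k snr w a g n :
  obsL S (ups S (inl (PU i))) (inl (Tbq b q k)) (inl (Nbq b q k)) (inr (DbQ b)) (inr (EbQ b))
     (inr (Gbq b q k)) snr w a g (inr n) = 0.
Proof.
rewrite /obsL.
have -> : ups S (inl (PU i)) (inr (DbQ b)) = 0 by reflexivity.
have -> : ups S (inl (PU i)) (inr (EbQ b)) = 0 by reflexivity.
have -> : ups S (inl (PU i)) (inr (Gbq b q k)) = 0 by reflexivity.
have -> : ups S (inl (PU i)) (inl (Tbq b q k)) = 0 by reflexivity.
have -> : ups S (inl (PU i)) (inl (Nbq b q k)) = 0 by reflexivity.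
repeat match goal with |- context [ind ?R ?a ?b] => generalize (ind R a b); intro end.
ring.
Qed.



Lemma sum1_lin {R : realFieldType} {I : finType} (X Y : I -> R) p q :
  \sum_u (- X u * p - Y u * q) = - (\sum_u X u) * p - (\sum_u Y u) * q.
Proof.
rewrite mulNr !mulr_suml -!sumrN -big_split; apply: eq_bigr => u _.
rewrite /=; ring.
Qed.

Lemma sum2_lin {R : realFieldType} {m n : nat} (X Y : 'I_m -> 'I_n -> R) p q :
  \sum_u \sum_k (- X u k * p - Y u k * q) =
  - (\sum_u \sum_k X u k) * p - (\sum_u \sum_k Y u k) * q.
Proof.
under eq_bigr do rewrite sum1_lin.
exact: sum1_lin.
Qed.

Lemma sum3_lin {R : realFieldType} {l m n : nat} (X Y : 'I_l -> 'I_m -> 'I_n -> R) p q :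
  \sum_v \sum_u \sum_k (- X v u k * p - Y v u k * q) =
  - (\sum_v \sum_u \sum_k X v u k) * p - (\sum_v \sum_u \sum_k Y v u k) * q.
Proof.
under eq_bigr do rewrite sum2_lin.
exact: sum1_lin.
Qed.

Lemma J12_PU {R : realFieldType} {NB NQ NU NK : nat} (S : sysdata R NB NQ NU NK) i n :
  J_kappa S (inl (PU i)) (inr n) =
  - (\sum_b a_b S b i 0 * ind R (inr (DbU b)) (inr n))
  - (\sum_b d_b S b i 0 * ind R (inr (EbU b)) (inr n))
  - a_Q S i 0 * ind R (inr DQU) (inr n) - d_Q S i 0 * ind R (inr EQU) (inr n).
Proof.
rewrite J_kappa_inr sum_J_eta.
under eq_bigr do under eq_bigr do under eq_bigr do rewrite obsL_PU_bu.
under [X in _ + X + _]eq_bigr do under eq_bigr do under eq_bigr do rewrite obsL_PU_qu.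
under [X in _ + X]eq_bigr do under eq_bigr do under eq_bigr do rewrite obsL_PU_bq.
rewrite [X in _ + X]big1 ?addr0; last first.
  by move=> b _; rewrite big1 // => q _; rewrite big1.
have E1 : \sum_(b < NB) \sum_(u < NU) \sum_(k < NK)
   (- (snr_bu S b u k * omega_bU S b k * (Dl_bu S b u k i 0 / c_light S)) *
       ind R (inr (DbU b)) (inr n) -
    snr_bu S b u k * (f_c S * alo_bu S b u k ^+ 2 / 2) * gpU_nu_bU S b k i 0 *
       ind R (inr (EbU b)) (inr n)) =
  - (\sum_b a_b S b i 0 * ind R (inr (DbU b)) (inr n))
  - (\sum_b d_b S b i 0 * ind R (inr (EbU b)) (inr n)).
  transitivity (\sum_b (- (a_b S b i 0 * ind R (inr (DbU b)) (inr n))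
                        - d_b S b i 0 * ind R (inr (EbU b)) (inr n))); last first.
    by rewrite big_split /= !sumrN.
  apply: eq_bigr => b _.
  rewrite /= sum2_lin mulNr /a_b /d_b !summxE exchange_big /=.
  congr (- (_ * _) - _ * _); apply: eq_bigr => u _; rewrite summxE;
    apply: eq_bigr => k _; rewrite mxE; ring.
have E2 : \sum_(q < NQ) \sum_(u < NU) \sum_(k < NK)
   (- (snr_qu S q u k * omega_qU S q k / c_light S * Dl_qu S q u k i 0) *
       ind R (inr DQU) (inr n) -
    snr_qu S q u k * (f_c S * alo_qu S q u k ^+ 2 / 2) * gpU_nu_qU S q k i 0 *
       ind R (inr EQU) (inr n)) =
  - a_Q S i 0 * ind R (inr DQU) (inr n) - d_Q S i 0 * ind R (inr EQU) (inr n).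
  rewrite sum3_lin /a_Q /d_Q !summxE; congr (- _ * _ - _ * _);
    apply: eq_bigr => q _; rewrite summxE; apply: eq_bigr => u _;
    rewrite summxE; apply: eq_bigr => k _; rewrite mxE; ring.
rewrite E1 E2.
repeat match goal with |- context [ind ?R ?a ?b] => generalize (ind R a b); intro end.
ring.
Qed.



Lemma sum_delta {R : realFieldType} {I : finType} (F : I -> R) (i0 : I) :
  \sum_i F i * (i0 == i)%:R = F i0.
Proof.
rewrite (bigD1 i0) //= eqxx mulr1 big1 ?addr0 // => i /negbTE.
by rewrite eq_sym => ->; rewrite mulr0.
Qed.

Lemma sum_zero {R : realFieldType} {I : finType} (F : I -> R) :
  \sum_i F i * 0 = 0.
Proof. by rewrite big1 // => *; rewrite mulr0. Qed.

Lemma sum_delta' {R : realFieldType} {I : finType} (F : I -> R) (i0 : I) :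
  \sum_i F i * (i == i0)%:R = F i0.
Proof. by under eq_bigr do rewrite eq_sym; exact: sum_delta. Qed.

Lemma z3 {R : realFieldType} (x y z : R) : x * 0 + y * 0 + z * 0 = 0.
Proof. ring. Qed.

Ltac zblock := (apply: big1 => ? _; apply: big1 => ? _; exact: z3).

Lemma Dn_DbU {R : realFieldType} {NB NQ NU NK : nat} (S : sysdata R NB NQ NU NK) b0 :
  Dn S (DbU b0) = \sum_(u < NU) \sum_(k < NK) snr_bu S b0 u k * omega_bU S b0 k.
Proof.
rewrite /Dn /s1 /s2 /s3 /ind /=.
rewrite [X in _ + X + _]big1 ?[X in _ + X]big1 ?addr0; try by move=> *; zblock.
rewrite -(sum_delta (fun b => \sum_(u < NU) \sum_(k < NK) snr_bu S b u k * omega_bU S b k) b0).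
apply: eq_bigr => b _; rewrite mulr_suml; apply: eq_bigr => u _; rewrite mulr_suml.
apply: eq_bigr => k _; rewrite !mulr0 !addr0; reflexivity.
Qed.

Lemma Dn_EbU {R : realFieldType} {NB NQ NU NK : nat} (S : sysdata R NB NQ NU NK) b0 :
  Dn S (EbU b0) = \sum_(u < NU) \sum_(k < NK) snr_bu S b0 u k / 2 * alo_bu S b0 u k ^+ 2.
Proof.
rewrite /Dn /s1 /s2 /s3 /ind /=.
rewrite [X in _ + X + _]big1 ?[X in _ + X]big1 ?addr0; try by move=> *; zblock.
rewrite -(sum_delta (fun b => \sum_(u < NU) \sum_(k < NK) snr_bu S b u k / 2 * alo_bu S b u k ^+ 2) b0).
apply: eq_bigr => b _; rewrite mulr_suml; apply: eq_bigr => u _; rewrite mulr_suml.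
apply: eq_bigr => k _; rewrite !mulr0 add0r addr0; reflexivity.
Qed.

Lemma Dn_DQU {R : realFieldType} {NB NQ NU NK : nat} (S : sysdata R NB NQ NU NK) :
  Dn S DQU = \sum_(q < NQ) \sum_(u < NU) \sum_(k < NK) snr_qu S q u k * omega_qU S q k.
Proof.
rewrite /Dn /s1 /s2 /s3 /ind /=.
rewrite [X in X + _ + _]big1 ?[X in _ + X]big1 ?addr0 ?add0r; try by move=> *; zblock.
apply: eq_bigr => q _; apply: eq_bigr => u _; apply: eq_bigr => k _.
rewrite !mulr0 !addr0 mulr1 //.
Qed.

Lemma Dn_EQU {R : realFieldType} {NB NQ NU NK : nat} (S : sysdata R NB NQ NU NK) :
  Dn S EQU = \sum_(q < NQ) \sum_(u < NU) \sum_(k < NK) snr_qu S q u k / 2 * alo_qu S q u k ^+ 2.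
Proof.
rewrite /Dn /s1 /s2 /s3 /ind /=.
rewrite [X in X + _ + _]big1 ?[X in _ + X]big1 ?addr0 ?add0r; try by move=> *; zblock.
apply: eq_bigr => q _; apply: eq_bigr => u _; apply: eq_bigr => k _.
rewrite !mulr0 addr0 add0r mulr1 //.
Qed.



Lemma J12_DbU {R : realFieldType} {NB NQ NU NK : nat} (S : sysdata R NB NQ NU NK) i b0 :
  J_kappa S (inl (PU i)) (inr (DbU b0)) = - a_b S b0 i 0.
Proof.
rewrite J12_PU /ind /= (sum_delta' (fun b => a_b S b i 0) b0) sum_zero !mulr0 !subr0 //.
Qed.

Lemma J12_EbU {R : realFieldType} {NB NQ NU NK : nat} (S : sysdata R NB NQ NU NK) i b0 :
  J_kappa S (inl (PU i)) (inr (EbU b0)) = - d_b S b0 i 0.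
Proof.
rewrite J12_PU /ind /= (sum_delta' (fun b => d_b S b i 0) b0) sum_zero !mulr0 !subr0 oppr0 add0r //.
Qed.

Lemma J12_DQU {R : realFieldType} {NB NQ NU NK : nat} (S : sysdata R NB NQ NU NK) i :
  J_kappa S (inl (PU i)) (inr DQU) = - a_Q S i 0.
Proof.
rewrite J12_PU /ind /= !sum_zero !mulr0 !subr0 mulr1 oppr0 add0r //.
Qed.

Lemma J12_EQU {R : realFieldType} {NB NQ NU NK : nat} (S : sysdata R NB NQ NU NK) i :
  J_kappa S (inl (PU i)) (inr EQU) = - d_Q S i 0.
Proof.
rewrite J12_PU /ind /= !sum_zero !mulr0 !subr0 mulr1 oppr0 add0r //.
Qed.



Ltac gring := repeat match goal with |- context [ind ?R ?a ?b] => generalize (ind R a b); intro end; ring.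

Lemma sum_lin_nuis {R : realFieldType} {NB NQ NU NK : nat}
  (w : nuis_idx NB NQ NU NK -> R) (A B : 'I_NB -> R) (C D : R) :
  \sum_n (- (\sum_b A b * ind R (inr (DbU b)) (inr n))
          - (\sum_b B b * ind R (inr (EbU b)) (inr n))
          - C * ind R (inr DQU) (inr n) - D * ind R (inr EQU) (inr n)) * w n
  = - (\sum_b A b * w (DbU b)) - (\sum_b B b * w (EbU b)) - C * w DQU - D * w EQU.
Proof.
have key : forall m, \sum_n ind R (inr m) (inr n) * w n = w m.
  move=> m; rewrite -[RHS](sum_delta w m); apply: eq_bigr => n _.
  by rewrite mulrC.
transitivity (\sum_n (- (\sum_b A b * (ind R (inr (DbU b)) (inr n) * w n))
          - (\sum_b B b * (ind R (inr (EbU b)) (inr n) * w n))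
          - C * (ind R (inr DQU) (inr n) * w n) - D * (ind R (inr EQU) (inr n) * w n))).
  apply: eq_bigr => n _; rewrite !mulrBl mulNr !mulr_suml.
  congr (- _ - _ - _ - _); try (apply: eq_bigr => b _); gring.
rewrite !big_split /= !sumrN -!mulr_sumr !key.
rewrite (exchange_big _ _ _ _ _ (fun n b => A b * _)).
rewrite (exchange_big _ _ _ _ _ (fun n b => B b * _)).
by congr (- _ - _ + _ + _); apply: eq_bigr => b _; rewrite -mulr_sumr key.
Qed.



Theorem lemma16 (R : realFieldType) (NB NQ NU NK : nat)
  (S : sysdata R NB NQ NU NK) :
  (0 < NQ)%N -> (0 < NU)%N -> (0 < NK)%N ->
  0 < c_light S -> 0 < f_c S ->
  (forall b u k, 0 < snr_bu S b u k) ->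
  (forall q u k, 0 < snr_qu S q u k) ->
  (forall b q k, 0 < snr_bq S b q k) ->
  (forall b u k, 0 < alo_bu S b u k) ->
  (forall q u k, 0 < alo_qu S q u k) ->
  (forall b q k, 0 < alo_bq S b q k) ->
  (forall b k, 0 < omega_bU S b k) ->
  (forall q k, 0 < omega_qU S q k) ->
  (forall b q k, 0 < omega_bq S b q k) ->
  (forall b u k, 0 < gfim_bu S b u k) ->
  (forall q u k, 0 < gfim_qu S q u k) ->
  (forall b q k, 0 < gfim_bq S b q k) ->
  G_pU_pU S =
    \sum_(b < NB) (\sum_(u < NU) \sum_(k < NK) snr_bu S b u k * omega_bU S b k)^-1
                    *: (a_b S b *m (a_b S b)^T)
  + (\sum_(q < NQ) \sum_(u < NU) \sum_(k < NK) snr_qu S q u k * omega_qU S q k)^-1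
                    *: (a_Q S *m (a_Q S)^T)
  + \sum_(b < NB) (\sum_(u < NU) \sum_(k < NK)
                      snr_bu S b u k / 2 * alo_bu S b u k ^+ 2)^-1
                    *: (d_b S b *m (d_b S b)^T)
  + (\sum_(q < NQ) \sum_(u < NU) \sum_(k < NK)
                      snr_qu S q u k / 2 * alo_qu S q u k ^+ 2)^-1
                    *: (d_Q S *m (d_Q S)^T).
Proof.
move=> hQ hU hK hc hf sbu squ sbq abu aqu abq obu oqu obq gbu gqu gbq.
have Dnz : forall n, Dn S n != 0.
  by move=> n; rewrite gt_eqF // (Dn_gt0 S n hQ hU hK).
have J22E : J22 S = diag_mx (\row_j Dn S (enum_val j)).
  apply/matrixP => a b; rewrite !mxE J22_entry.
  have -> : ind R (inr (enum_val a)) (inr (enum_val b)) = (a == b)%:R.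
    rewrite /ind (_ : (inr (enum_val a) == inr (enum_val b) :> eta_idx NB NQ NU NK) = (a == b)) //.
    apply/idP/idP => [/eqP [] /enum_val_inj ->|/eqP ->] //.
  by case: (a == b); rewrite ?mul1r ?mul0r ?mulr1n ?mulr0n.
have invE : invmx (J22 S) = diag_mx (\row_j (Dn S (enum_val j))^-1).
  pose d : 'rV[R]_#|{: nuis_idx NB NQ NU NK}| := \row_j Dn S (enum_val j).
  pose dv : 'rV[R]_#|{: nuis_idx NB NQ NU NK}| := \row_j (Dn S (enum_val j))^-1.
  have hm : diag_mx d *m diag_mx dv = 1%:M.
    rewrite mulmx_diag; apply/matrixP => a b; rewrite !mxE mulfV //.
  have [hu _] := mulmx1_unit hm.
  by rewrite J22E -[RHS](mulKmx hu) hm mulmx1.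
apply/matrixP => i j.
rewrite mxE /J_nu invE mul_mx_diag !mxE.
under eq_bigr do rewrite !mxE !enum_rankK -mulrA.
rewrite -(big_enum_val (A := {: nuis_idx NB NQ NU NK})
   (fun n => J_kappa S (inl (PU i)) (inr n) *
            ((Dn S n)^-1 * J_kappa S (inl (PU j)) (inr n)))).
rewrite (eq_bigl (fun _ => true)) //.
under eq_bigr do rewrite [J_kappa S (inl (PU i)) _]J12_PU.
rewrite (sum_lin_nuis (fun n => (Dn S n)^-1 * J_kappa S (inl (PU j)) (inr n))) /=.
rewrite Dn_DQU Dn_EQU J12_DQU J12_EQU.
under eq_bigr do rewrite Dn_DbU J12_DbU.
under [X in _ - X - _ - _]eq_bigr do rewrite Dn_EbU J12_EbU.
move: (a_Q S) (d_Q S) (a_b S) (d_b S) => aQ dQ ab db.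
rewrite ?mxE ?summxE.
rewrite [X in _ = X + _]addrAC.
congr (_ + _ + _ + _).
- rewrite -sumrN; apply: eq_bigr => b _; rewrite !mxE big_ord1 !mxE; ring.
- rewrite -sumrN; apply: eq_bigr => b _; rewrite !mxE big_ord1 !mxE; ring.
- rewrite big_ord1 !mxE; ring.
- rewrite big_ord1 !mxE; ring.
Qed.
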